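(* Let $\Gamma$ be a symmetric bimatrix game with common pure strategy set $C_1=\{1,\dots,m\}$. Then the set $\mathrm{XE}_{\mathrm{sym}}(\Gamma)$ of exchangeable equilibria of $\Gamma$ is compact, convex, and semialgebraic.
   Context: A symmetric bimatrix game: two players with the same finite strategy set $C_1$ ($m=|C_1|\ge2$) and utilities $u_1,u_2:C_1\times C_1\to\mathbb{R}$ with $u_1(s_1,s_2)=u_2(s_2,s_1)$. Distributions on $C_1\times C_1$ are identified with $m\times m$ nonnegative matrices summing to one. A distribution $\pi$ is a correlated equilibrium if for each player $i$ and all $s_i,t_i\in C_1$, $\sum_{s_{-i}}[u_i(t_i,s_{-i})-u_i(s)]\pi(s)\le 0$; $\mathrm{CE}(\Gamma)$ denotes the set of correlated equilibria. An exchangeable equilibrium is a correlated equilibrium in which the players' actions are conditionally i.i.d.; equivalently $\mathrm{XE}_{\mathrm{sym}}(\Gamma)=\mathrm{CE}(\Gamma)\cap\mathrm{conv}\{xx^T: x\text{ a probability vector on }C_1\}$. *)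

(* Defs.v *)
From HB Require Import structures.
From mathcomp Require Import all_boot all_order all_algebra.
From mathcomp Require Import all_classical all_reals all_analysis.
Set Implicit Arguments. Unset Strict Implicit. Unset Printing Implicit Defensive.
Import Order.TTheory GRing.Theory Num.Theory.
Import numFieldNormedType.Exports.
Local Open Scope ring_scope.
Local Open Scope classical_set_scope.

(* Strategy set C1 = 'I_m; utilities u1 u2 : 'I_m -> 'I_m -> R.
   A distribution on C1 x C1 is an m x m matrix. *)

Definition symmetric_game (R : realType) (m : nat)
    (u1 u2 : 'I_m -> 'I_m -> R) : Prop :=
  forall s1 s2, u1 s1 s2 = u2 s2 s1.

Definition is_distribution (R : realType) (m : nat) (pi : 'M[R]_(m, m)) : Prop :=
  (forall i j, 0 <= pi i j) /\ \sum_(i < m) \sum_(j < m) pi i j = 1.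

Definition is_prob_vector (R : realType) (m : nat) (x : 'cV[R]_m) : Prop :=
  (forall i, 0 <= x i ord0) /\ \sum_(i < m) x i ord0 = 1.

Definition correlated_equilibrium (R : realType) (m : nat)
    (u1 u2 : 'I_m -> 'I_m -> R) (pi : 'M[R]_(m, m)) : Prop :=
  is_distribution pi /\
  (forall s1 t1 : 'I_m,
      \sum_(s2 < m) (u1 t1 s2 - u1 s1 s2) * pi s1 s2 <= 0) /\
  (forall s2 t2 : 'I_m,
      \sum_(s1 < m) (u2 s1 t2 - u2 s1 s2) * pi s1 s2 <= 0).

Definition CE (R : realType) (m : nat) (u1 u2 : 'I_m -> 'I_m -> R)
  : set 'M[R]_(m, m) := [set pi | correlated_equilibrium u1 u2 pi].

Definition conv_prod_dists (R : realType) (m : nat) : set 'M[R]_(m, m) :=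
  [set pi | exists (k : nat) (w : 'I_k -> R) (x : 'I_k -> 'cV[R]_m),
      (forall l, 0 <= w l) /\ \sum_(l < k) w l = 1 /\
      (forall l, is_prob_vector (x l)) /\
      pi = \sum_(l < k) w l *: (x l *m (x l)^T)].

Definition XE_sym (R : realType) (m : nat) (u1 u2 : 'I_m -> 'I_m -> R)
  : set 'M[R]_(m, m) := CE u1 u2 `&` @conv_prod_dists R m.

Inductive rpoly (R : Type) (I : Type) : Type :=
| PConst of R
| PVar of I
| PAdd of rpoly R I & rpoly R I
| PMul of rpoly R I & rpoly R I.

Fixpoint rpoly_eval (R : realType) (I : Type) (p : rpoly R I) (v : I -> R) : R :=
  match p with
  | PConst c => c
  | PVar i => v i
  | PAdd p q => rpoly_eval p v + rpoly_eval q v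
  | PMul p q => rpoly_eval p v * rpoly_eval q v
  end.

Inductive sa_formula (R : Type) (I : Type) : Type :=
| SAeq0 of rpoly R I
| SAgt0 of rpoly R I
| SAnot of sa_formula R I
| SAand of sa_formula R I & sa_formula R I
| SAor of sa_formula R I & sa_formula R I.

Fixpoint sa_holds (R : realType) (I : Type) (f : sa_formula R I) (v : I -> R) : Prop :=
  match f with
  | SAeq0 p => rpoly_eval p v = 0
  | SAgt0 p => 0 < rpoly_eval p v
  | SAnot g => ~ sa_holds g v
  | SAand g h => sa_holds g v /\ sa_holds h v
  | SAor g h => sa_holds g v \/ sa_holds h v
  end.

Definition semialgebraic (R : realType) (m n : nat) (S : set 'M[R]_(m, n)) : Prop :=
  exists f : sa_formula R ('I_m * 'I_n),
    S = [set M | sa_holds f (fun ij => M ij.1 ij.2)].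

(* Main.v *)
Require Import Defs.
From HB Require Import structures.
From mathcomp Require Import all_boot all_order all_algebra.
From mathcomp Require Import all_classical all_reals all_analysis.
From mathcomp Require Import polyrcf qe_rcf_th ordered_qelim qe_rcf.
From mathcomp Require Import zify.
Import Order.TTheory GRing.Theory Num.Theory.
Import numFieldNormedType.Exports.
Set Implicit Arguments. Unset Strict Implicit. Unset Printing Implicit Defensive.
Local Open Scope ring_scope.
Local Open Scope classical_set_scope.

Section Trans.
Variables (R : realType) (I : Type) (var : nat -> rpoly R I).

Fixpoint tr_term (t : GRing.term R) : rpoly R I :=
 match t with
 | GRing.Var n => var n
 | GRing.Const c => PConst I c
 | GRing.NatConst n => PConst I n%:R
 | GRing.Add a b => PAdd (tr_term a) (tr_term b)
 | GRing.Opp a => PMul (PConst I (-1)) (tr_term a)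
 | GRing.NatMul a n => PMul (tr_term a) (PConst I n%:R)
 | GRing.Mul a b => PMul (tr_term a) (tr_term b)
 | GRing.Inv a => PConst I 0
 | GRing.Exp a n => iter n (PMul (tr_term a)) (PConst I 1)
 end.

Definition psub (a b : rpoly R I) := PAdd a (PMul (PConst I (-1)) b).

Fixpoint tr_form (f : ord.formula R) : sa_formula R I :=
 match f with
 | ord.Bool b => if b then SAeq0 (PConst I 0) else SAgt0 (PConst I 0)
 | ord.Equal a b => SAeq0 (psub (tr_term a) (tr_term b))
 | ord.Lt a b => SAgt0 (psub (tr_term b) (tr_term a))
 | ord.Le a b => SAor (SAgt0 (psub (tr_term b) (tr_term a)))
                      (SAeq0 (psub (tr_term b) (tr_term a)))
 | ord.Unit _ => SAeq0 (PConst I 0)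
 | ord.And f g => SAand (tr_form f) (tr_form g)
 | ord.Or f g => SAor (tr_form f) (tr_form g)
 | ord.Implies f g => SAor (SAnot (tr_form f)) (tr_form g)
 | ord.Not f => SAnot (tr_form f)
 | _ => SAeq0 (PConst I 0)
 end.

Variables (v : I -> R) (e : seq R).
Hypothesis hvar : forall n, rpoly_eval (var n) v = nth 0 e n.

Lemma tr_termE t : GRing.rterm t -> rpoly_eval (tr_term t) v = GRing.eval e t.
Proof.
elim: t => //=.
- by move=> a IHa b IHb /andP[/IHa -> /IHb ->].
- by move=> a IHa /IHa ->; rewrite mulN1r.
- by move=> a IHa n /IHa ->; rewrite mulr_natr.
- by move=> a IHa b IHb /andP[/IHa -> /IHb ->].
- move=> a IHa n /IHa Ha; elim: n => [|n IHn] /=; first by rewrite expr0.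
  by rewrite IHn Ha exprS.
Qed.

Lemma psubE a b : rpoly_eval (psub a b) v = rpoly_eval a v - rpoly_eval b v.
Proof. by rewrite /= mulN1r. Qed.

Lemma impl_orE (a b : bool) : (~ a \/ b) <-> (a ==> b).
Proof.
case: a; case: b => /=; split=> //.
- by right.
- by case=> // H; apply: H.
- by left.
- by left.
Qed.

Lemma tr_formE f : ord.qf_form f -> ord.rformula f ->
  sa_holds (tr_form f) v <-> ord.qf_eval e f.
Proof.
elim: f => //=.
- by case=> /=; rewrite ?ltxx.
- move=> a b _ /andP[ra rb]; rewrite ?mulN1r !tr_termE //.
  split=> [/eqP|/eqP->]; last by rewrite subrr.
  by rewrite subr_eq0.
- move=> a b _ /andP[ra rb]; rewrite ?mulN1r !tr_termE // subr_gt0.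
  by split=> [->|].
- move=> a b _ /andP[ra rb]; rewrite ?mulN1r !tr_termE // subr_gt0 le_eqVlt.
  split=> [[->|/eqP]|/orP[/eqP->|->]].
  + by rewrite orbT.
  + by rewrite subr_eq0 eq_sym => ->.
  + by right; rewrite subrr.
  + by left.
- move=> f1 IHf g IHg /andP[qf qg] /andP[rf rg].
  rewrite (IHf qf rf) (IHg qg rg); split=> [[->->]|/andP[]]//.
- move=> f1 IHf g IHg /andP[qf qg] /andP[rf rg].
  rewrite (IHf qf rf) (IHg qg rg); split=> [[->|->]|/orP[]]; rewrite ?orbT//;
  by [left|right].
- move=> f1 IHf g IHg /andP[qf qg] /andP[rf rg].
  rewrite (IHf qf rf) (IHg qg rg).
  exact: impl_orE.
- move=> f1 IHf qf rf; rewrite (IHf qf rf).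
  by case: (ord.qf_eval e f1) => /=; split=> // H; apply: H.
Qed.
End Trans.

Lemma qe_exists (R : realType) (I : Type) (var : nat -> rpoly R I)
  (f : ord.formula R) : exists g : sa_formula R I,
  forall v e, (forall n, rpoly_eval (var n) v = nth 0 e n) ->
    (sa_holds g v <-> ord.holds e f).
Proof.
pose qf := ord.quantifier_elim (@wproj R) (ord.to_rform f).
have /andP[qq rq] : ord.qf_form qf && ord.rformula qf.
  exact: (ord.quantifier_elim_wf (@wf_QE_wproj R) (ord.to_rform_rformula f)).
exists (tr_form var qf) => v e hv.
rewrite (tr_formE hv qq rq).
have := rcf_satP e f; rewrite /rcf_sat /ord.proj_sat -/qf.
by case=> H; split.
Qed.
Lemma dep_exists (R : realType) m n k (P : 'I_k -> 'M[R]_(m,n)) :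
  (m * n + 1 < k)%N -> exists c : 'I_k -> R, (exists l, c l != 0) /\
   \sum_l c l = 0 /\ \sum_l c l *: P l = 0.
Proof.
move=> hk.
pose A : 'M[R]_(k, 1 + m * n) := \matrix_(l < k) row_mx (1 : 'rV[R]_1) (mxvec (P l)).
have kA : kermx A != 0.
  rewrite kermx_eq0 /row_free; apply/negP => /eqP hr.
  have := rank_leq_col A; rewrite hr => hle.
  by move: hk; rewrite addnC ltnNge hle.
have [i Hi] : exists i, row i (kermx A) != 0.
  apply/not_existsP => H; move/negP: kA; apply; apply/eqP/row_matrixP => i.
  by rewrite row0; have /negP/negPn/eqP := H i.
pose c := row i (kermx A).
have cA : c *m A = 0 by rewrite /c -row_mul mulmx_ker row0.
rewrite mulmx_sum_row in cA.
have rA l : row l A = row_mx 1 (mxvec (P l)) by rewrite rowK.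
exists (fun l => c 0 l); split; [|split].
- apply/not_existsP => H; move/negP: Hi; apply; apply/eqP/rowP => l.
  by have /negP/negPn/eqP := H l; rewrite /c !mxE.
- have := congr1 (fun M => lsubmx M 0 0) cA.
  rewrite raddf_sum /= summxE linear0 => H.
  transitivity ((0 : 'M[R]_(1,1)) 0 0); last by rewrite mxE.
  rewrite -H.

  apply: eq_bigr => l _; rewrite rA.
  by rewrite linearZ /= row_mxKl !mxE eqxx mulr1.
- have := congr1 (fun M => rsubmx M) cA.
  rewrite raddf_sum /= linear0 => H.
  apply/eqP; rewrite -mxvec_eq0 raddf_sum /=; apply/eqP; rewrite -[X in _ = X]H.
  by apply: eq_bigr => l _; rewrite rA !linearZ /= row_mxKr.
Qed.
Lemma cara_step (R : realType) m n k (w : 'I_k.+1 -> R) (P : 'I_k.+1 -> 'M[R]_(m,n)) :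
  (m * n + 1 < k.+1)%N -> (forall l, 0 <= w l) -> \sum_l w l = 1 ->
  exists (l0 : 'I_k.+1) (w' : 'I_k -> R), (forall l, 0 <= w' l) /\
    \sum_l w' l = 1 /\ \sum_l w' l *: P (lift l0 l) = \sum_l w l *: P l.
Proof.
move=> hk w0 w1.
have [c [[l2 cl2] [c0 cP]]] := dep_exists P hk.
have [l1 hl1] : exists l, 0 < c l.
  apply/not_existsP => H.
  have hc : forall l, 0 <= - c l.
    by move=> l; rewrite oppr_ge0 leNgt; apply/negP/H.
  move/negP: cl2; apply; rewrite -oppr_eq0; apply/eqP.
  apply: (psumr_eq0P (P := predT) (fun l _ => hc l)) => //.
  by rewrite sumrN c0 oppr0.
have [l0 hc0 hmin] := @arg_minP _ _ _ l1 (fun l => 0 < c l) (fun l => w l / c l) hl1.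
set t := w l0 / c l0.
have t0 : 0 <= t by rewrite /t divr_ge0 // ltW.
pose w' l := w l - t * c l.
have w'0 l : 0 <= w' l.
  rewrite /w' subr_ge0; have [cl|cl] := ltP 0 (c l).
    by have := hmin l cl; rewrite /= ler_pdivlMr // mulrC.
  by apply: le_trans (w0 l); rewrite mulr_ge0_le0.
have w'l0 : w' l0 = 0 by rewrite /w' /t divfK ?subrr // gt_eqF.
have sw' : \sum_l w' l = 1.
  by rewrite /w' sumrB -mulr_sumr c0 mulr0 subr0.
have sP : \sum_l w' l *: P l = \sum_l w l *: P l.
  rewrite /w' (eq_bigr (fun l => w l *: P l - t *: (c l *: P l))); last first.
    by move=> l _; rewrite scalerBl scalerA.
  by rewrite sumrB -scaler_sumr cP scaler0 subr0.
exists l0, (fun l => w' (lift l0 l)); split => //; split.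
- by rewrite -sw' (bigD1_ord l0) //= w'l0 add0r.
- by rewrite -sP (bigD1_ord l0) //= w'l0 scale0r add0r.
Qed.
Definition convrep (R : realType) m k (w : 'I_k -> R) (x : 'I_k -> 'cV[R]_m)
  (M : 'M[R]_(m, m)) :=
  (forall l, 0 <= w l) /\ \sum_(l < k) w l = 1 /\
  (forall l, is_prob_vector (x l)) /\
  M = \sum_(l < k) w l *: (x l *m (x l)^T).

Lemma cara_le (R : realType) m k (w : 'I_k -> R) (x : 'I_k -> 'cV[R]_m) M :
  convrep w x M -> exists k', (k' <= m * m + 1)%N /\
     exists w' x', @convrep R m k' w' x' M.
Proof.
elim: k w x => [|k IH] w x hc.
  by exists 0%N; split => //; exists w, x.
have [hk|hk] := leqP k.+1 (m * m + 1); first by exists k.+1; split=> //; exists w, x.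
case: hc => [w0 [w1 [xp hM]]].
have [l0 [w' [w'0 [w'1 sP]]]] := cara_step (fun l => x l *m (x l)^T) hk w0 w1.
apply: (IH w' (fun l => x (lift l0 l))).
by split=> //; split=> //; split=> [l|]; [apply: xp|rewrite hM -sP].
Qed.

Lemma cara (R : realType) m (M : 'M[R]_(m, m)) :
  conv_prod_dists M -> exists w x, @convrep R m (m * m + 1) w x M.
Proof.
move=> [k [w [x [w0 [w1 [xp ->]]]]]].
have [k' [hk [w' [x' [w'0 [w'1 [x'p ->]]]]]]] :
   exists k', (k' <= m * m + 1)%N /\ exists w' x', @convrep R m k' w' x'
     (\sum_(l < k) w l *: (x l *m (x l)^T)) by apply: cara_le.
case: k' hk w' x' w'0 w'1 x'p => [|k1] hk w' x' w'0 w'1 x'p.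
  by move: w'1; rewrite big_ord0 => /eqP; rewrite eq_sym oner_eq0.
pose W (l : nat) := w' (inord l).
pose X (l : nat) := x' (inord l).
exists (fun l : 'I_(m * m + 1) => if (l < k1.+1)%N then W l else 0).
exists (fun l : 'I_(m * m + 1) => X l).
have sumE (F : 'I_k1.+1 -> 'M[R]_(m, m)) :
  \sum_(l < m * m + 1) (if (l < k1.+1)%N then F (inord l) else 0) = \sum_l F l.
  rewrite -big_mkcond /= -(big_ord_widen _ (fun l => F (inord l)) hk).
  by apply: eq_bigr => l _; rewrite inord_val.
have sumE' (F : 'I_k1.+1 -> R) :
  \sum_(l < m * m + 1) (if (l < k1.+1)%N then F (inord l) else 0) = \sum_l F l.
  rewrite -big_mkcond /= -(big_ord_widen _ (fun l => F (inord l)) hk).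
  by apply: eq_bigr => l _; rewrite inord_val.
split; [|split; [|split]].
- by move=> l; case: ifP => // _; apply: w'0.
- by rewrite sumE'.
- by move=> l; apply: x'p.
- rewrite -sumE; apply: eq_bigr => l _.
  by case: ifP => _; rewrite ?scale0r.
Qed.
Section Enc.
Variable R : realType.

Definition tsum (T : finType) (f : T -> GRing.term R) : GRing.term R :=
  foldr (fun n acc => GRing.Add (f n) acc) (GRing.Const 0) (index_enum T).

Lemma eval_tsum (T : finType) e (f : T -> GRing.term R) :
  GRing.eval e (tsum f) = \sum_i GRing.eval e (f i).
Proof.
rewrite /tsum; elim: (index_enum T) => [|a s IH] /=; first by rewrite big_nil.
by rewrite big_cons IH.
Qed.

Definition fand (T : finType) (f : T -> ord.formula R) : ord.formula R :=
  foldr (fun n acc => ord.And (f n) acc) (ord.Bool true) (index_enum T).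

Lemma holds_fand (T : finType) e (f : T -> ord.formula R) :
  ord.holds e (fand f) <-> forall i, ord.holds e (f i).
Proof.
have H : forall s : seq T, ord.holds e
   (foldr (fun n acc => ord.And (f n) acc) (ord.Bool true) s) <->
   forall i, i \in s -> ord.holds e (f i).
  elim=> [|a s IH] /=; first by split.
  rewrite IH; split.
    by move=> [ha hs] i; rewrite inE => /orP[/eqP->//|/hs].
  move=> h; split; first by apply: h; rewrite inE eqxx.
  by move=> i hi; apply: h; rewrite inE hi orbT.
rewrite /fand H; split=> h i //; apply: h; exact: mem_index_enum.
Qed.

Lemma holds_exists_iota (Q : (nat -> R) -> Prop) body :
 (forall e, ord.holds e body <-> Q (nth 0 e)) ->
 forall k a e, ord.holds e (foldr (fun n f => ord.Exists n f) body (iota a k)) <->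
   exists g, (forall n, ~~ ((a <= n) && (n < a + k))%N -> g n = nth 0 e n) /\ Q g.
Proof.
move=> hb; elim=> [|k IH] a e /=.
  rewrite hb; split=> [hq|[g [hg hq]]]; first by exists (nth 0 e).
  have -> : nth 0 e = g by apply/funext => n; rewrite hg //; lia.
  done.
split.
  move=> [x /IH [g [hg hq]]]; exists g; split=> // n hn.
  have [ena|na] := eqVneq n a.
    by move: hn; rewrite ena; lia.
  rewrite hg ?nth_set_nth /= ?(negbTE na) //; lia.
move=> [g [hg hq]]; exists (g a); apply/IH; exists g; split=> // n hn.
rewrite nth_set_nth /=; have [->//|na] := eqVneq n a.
apply: hg; lia.
Qed.

Section Forms.
Variables (m : nat) (u1 u2 : 'I_m -> 'I_m -> R).

Definition ei (i j : 'I_m) : nat := (i * m + j)%N.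
Definition wi (l : 'I_(m * m + 1)) : nat := (m * m + l)%N.
Definition xi (l : 'I_(m * m + 1)) (i : 'I_m) : nat :=
  (m * m + (m * m + 1) + l * m + i)%N.
Definition tv (n : nat) : GRing.term R := GRing.Var R n.

Definition bodyF : ord.formula R :=
  ord.And (fand (fun l => ord.Le (GRing.Const 0) (tv (wi l))))
  (ord.And (ord.Equal (tsum (fun l => tv (wi l))) (GRing.Const 1))
  (ord.And (fand (fun l => fand (fun i => ord.Le (GRing.Const 0) (tv (xi l i)))))
  (ord.And (fand (fun l => ord.Equal (tsum (fun i => tv (xi l i))) (GRing.Const 1)))
   (fand (fun i => fand (fun j => ord.Equal (tv (ei i j))
      (tsum (fun l => GRing.Mul (tv (wi l)) (GRing.Mul (tv (xi l i)) (tv (xi l j))))))))))).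

Definition Qb (g : nat -> R) : Prop :=
  (forall l, 0 <= g (wi l)) /\ (\sum_l g (wi l) = 1) /\
  (forall l i, 0 <= g (xi l i)) /\ (forall l, (\sum_i g (xi l i)) = 1) /\
  (forall i j, g (ei i j) = \sum_l g (wi l) * (g (xi l i) * g (xi l j))).

Lemma bodyP e : ord.holds e bodyF <-> Qb (nth 0 e).
Proof.
rewrite /bodyF /Qb /=.
split.
  move=> [/holds_fand h1 [h2 [/holds_fand h3 [/holds_fand h4 /holds_fand h5]]]].
  split; first by move=> l; have := h1 l.
  split; first by move: h2; rewrite !eval_tsum.
  split; first by move=> l i; have /holds_fand := h3 l; apply.
  split; first by move=> l; have := h4 l; rewrite /= eval_tsum.
  by move=> i j; have /holds_fand := h5 i => /(_ j); rewrite /= eval_tsum.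
move=> [h1 [h2 [h3 [h4 h5]]]].
split; first by apply/holds_fand.
split; first by rewrite !eval_tsum.
split; first by apply/holds_fand => l; apply/holds_fand => i; apply: h3.
split; first by apply/holds_fand => l /=; rewrite eval_tsum; apply: h4.
by apply/holds_fand => i; apply/holds_fand => j /=; rewrite eval_tsum; apply: h5.
Qed.

Definition CEF : ord.formula R :=
  ord.And (fand (fun i => fand (fun j => ord.Le (GRing.Const 0) (tv (ei i j)))))
  (ord.And (ord.Equal (tsum (fun i => tsum (fun j => tv (ei i j)))) (GRing.Const 1))
  (ord.And (fand (fun s1 => fand (fun t1 =>
     ord.Le (tsum (fun s2 => GRing.Mul (GRing.Const (u1 t1 s2 - u1 s1 s2)) (tv (ei s1 s2))))
        (GRing.Const 0))))
  (fand (fun s2 => fand (fun t2 =>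
     ord.Le (tsum (fun s1 => GRing.Mul (GRing.Const (u2 s1 t2 - u2 s1 s2)) (tv (ei s1 s2))))
        (GRing.Const 0)))))).

Definition QCE (g : nat -> R) : Prop :=
  ((forall i j, 0 <= g (ei i j)) /\ (\sum_i \sum_j g (ei i j)) = 1) /\
  (forall s1 t1, \sum_s2 (u1 t1 s2 - u1 s1 s2) * g (ei s1 s2) <= 0) /\
  (forall s2 t2, \sum_s1 (u2 s1 t2 - u2 s1 s2) * g (ei s1 s2) <= 0).

Lemma CEP e : ord.holds e CEF <-> QCE (nth 0 e).
Proof.
rewrite /CEF /QCE /=.
split.
  move=> [/holds_fand h1 [h2 [/holds_fand h3 /holds_fand h4]]].
  split; [split|split].
  - by move=> i j; have /holds_fand := h1 i; apply.
  - by move: h2; rewrite eval_tsum (eq_bigr _ (fun i _ => eval_tsum _ _)).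
  - by move=> s1 t1; have /holds_fand := h3 s1 => /(_ t1); rewrite /= eval_tsum.
  - by move=> s1 t1; have /holds_fand := h4 s1 => /(_ t1); rewrite /= eval_tsum.
move=> [[h1 h2] [h3 h4]].
split; first by apply/holds_fand => i; apply/holds_fand => j; apply: h1.
split; first by rewrite eval_tsum (eq_bigr _ (fun i _ => eval_tsum _ _)).
split; first by apply/holds_fand => i; apply/holds_fand => j /=; rewrite eval_tsum; apply: h3.
by apply/holds_fand => i; apply/holds_fand => j /=; rewrite eval_tsum; apply: h4.
Qed.
End Forms.
End Enc.

Section Bridge.
Variables (R : realType) (n : nat).
Local Notation m := n.+1.
Local Notation NN := (m * m + 1)%N.
Local Notation KK := (NN + NN * m)%N.

Definition env (M : 'M[R]_(m, m)) : seq R :=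
  mkseq (fun k => M (inord (k %/ m)) (inord (k %% m))) (m * m).

Lemma ei_lt (i j : 'I_m) : (ei i j < m * m)%N.
Proof. rewrite /ei; have := ltn_ord i; have := ltn_ord j; nia. Qed.

Lemma ei_div (i j : 'I_m) : ((ei i j) %/ m = i)%N /\ ((ei i j) %% m = j)%N.
Proof.
rewrite /ei divnMDl // divn_small // addn0 modnMDl modn_small //.
Qed.

Lemma nth_env M (i j : 'I_m) : nth 0 (env M) (ei i j) = M i j.
Proof.
rewrite /env nth_mkseq ?ei_lt //; have [-> ->] := ei_div i j.
by rewrite !inord_val.
Qed.

Lemma conv_iff (M : 'M[R]_(m, m)) : conv_prod_dists M <->
  exists g, (forall k, ~~ ((m * m <= k) && (k < m * m + KK))%N ->
     g k = nth 0 (env M) k) /\ @Qb R m g.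
Proof.
split.
  move=> /cara [w [x [w0 [w1 [xp hM]]]]].
  pose g k := if (k < m * m)%N then nth 0 (env M) k
    else if (k < m * m + NN)%N then w (inord (k - m * m))
    else if (k < m * m + KK)%N then
      x (inord ((k - m * m - NN) %/ m)) (inord ((k - m * m - NN) %% m)) ord0
    else nth 0 (env M) k.
  have gw l : g (wi l) = w l.
    rewrite /g /wi ifF; last by lia.
    by rewrite ifT ?addKn ?inord_val //; have := ltn_ord l; lia.
  have gx l i : g (xi l i) = x l i ord0.
    rewrite /g /xi ifF; last by lia.
    rewrite ifF; last by lia.
    rewrite ifT; last by have := ltn_ord l; have := ltn_ord i; nia.
    have -> : (m * m + NN + l * m + i - m * m - NN = l * m + i)%N by lia.
    by rewrite divnMDl // divn_small // addn0 modnMDl modn_small // !inord_val.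
  have ge i j : g (ei i j) = M i j.
    by rewrite /g ifT ?nth_env // ei_lt.
  exists g; split.
    move=> k hk; rewrite /g; case: ifP => // h1.
    rewrite ifF; last by lia.
    by rewrite ifF //; lia.
  split; first by move=> l; rewrite gw.
  split; first by under eq_bigr do rewrite gw.
  split; first by move=> l i; rewrite gx; case: (xp l).
  split; first by move=> l; under eq_bigr do rewrite gx; case: (xp l).
  move=> i j; rewrite ge hM summxE; apply: eq_bigr => l _.
  by rewrite gw !gx !mxE big_ord1 !mxE.
move=> [g [hg [h1 [h2 [h3 [h4 h5]]]]]].
exists NN, (fun l => g (wi l)), (fun l => \col_i g (xi l i)).
split=> //; split=> //; split.
  move=> l; split; first by move=> i; rewrite mxE.
  by under eq_bigr do rewrite mxE.
apply/matrixP => i j; rewrite -nth_env -hg; last by have := ei_lt i j; lia.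
rewrite h5 summxE; apply: eq_bigr => l _.
by rewrite !mxE big_ord1 !mxE.
Qed.

Lemma CE_iff (u1 u2 : 'I_m -> 'I_m -> R) (M : 'M[R]_(m, m)) :
  QCE u1 u2 (nth 0 (env M)) <-> correlated_equilibrium u1 u2 M.
Proof.
rewrite /QCE /correlated_equilibrium /is_distribution.
have E : (fun i j : 'I_m => nth 0 (env M) (ei i j)) = (fun i j => M i j).
  by apply/funext => i; apply/funext => j; rewrite nth_env.
have E' i j : nth 0 (env M) (ei i j) = M i j by rewrite nth_env.
split.
  move=> [[a b] [c d]]; split; [split|split].
  - by move=> i j; rewrite -E'.
  - by rewrite -b; apply: eq_bigr => i _; apply: eq_bigr => j _; rewrite E'.
  - by move=> s t; move: (c s t); under eq_bigr do rewrite E'.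
  - by move=> s t; move: (d s t); under eq_bigr do rewrite E'.
move=> [[a b] [c d]]; split; [split|split].
- by move=> i j; rewrite E'.
- by rewrite -b; apply: eq_bigr => i _; apply: eq_bigr => j _; rewrite E'.
- by move=> s t; under eq_bigr do rewrite E'.
- by move=> s t; under eq_bigr do rewrite E'.
Qed.

Lemma XE_semialg (u1 u2 : 'I_m -> 'I_m -> R) : semialgebraic (XE_sym u1 u2).
Proof.
pose F := ord.And (CEF u1 u2) (foldr (fun k f => ord.Exists k f) (@bodyF R m) (iota (m * m) KK)).
pose var k : rpoly R ('I_m * 'I_m) :=
  if (k < m * m)%N then PVar R (inord (k %/ m), inord (k %% m)) else PConst _ 0.
have [G HG] := qe_exists var F.
exists G; apply/seteqP; split => M /=.
  move=> [hCE hconv]; apply/(HG _ (env M)).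
    move=> k; rewrite /var; case: ifP => hk /=.
      by rewrite /env nth_mkseq.
    by rewrite nth_default // size_mkseq leqNgt hk.
  split; first by apply/CEP/CE_iff.
  apply: (proj2 (holds_exists_iota (@bodyP R m) KK (m * m) (env M))).
  exact/conv_iff.
move=> hG.
have hv : forall k, rpoly_eval (var k) (fun ij => M ij.1 ij.2) = nth 0 (env M) k.
  move=> k; rewrite /var; case: ifP => hk /=.
    by rewrite /env nth_mkseq.
  by rewrite nth_default // size_mkseq leqNgt hk.
have := proj1 (HG _ _ hv) hG => [[/CEP/CE_iff hCE hc]].
split=> //; apply/conv_iff.
exact: (proj1 (holds_exists_iota (@bodyP R m) KK (m * m) (env M)) hc).
Qed.
End Bridge.

Section Topo.
Variable R : realType.

Lemma closed_forall (T : topologicalType) (I : Type) (F : I -> set T) :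
  (forall i, closed (F i)) -> closed [set x | forall i, F i x].
Proof.
move=> hF.
have -> : [set x | forall i, F i x] = \bigcap_(i in setT) F i.
  by apply/seteqP; split=> x /= h i //; apply: h.
by apply: closed_bigI => i _.
Qed.

Lemma closed_pre (T : topologicalType) (f : T -> R) (D : set R) :
  continuous f -> closed D -> closed [set x | D (f x)].
Proof. by move=> cf; apply: preimage_closed => x _; apply: cf. Qed.

Lemma cont_sum (T : topologicalType) (I : Type) (s : seq I) (F : I -> T -> R) :
  (forall i, continuous (F i)) -> continuous (fun x => \sum_(i <- s) F i x).
Proof.
move=> hF; elim: s => [|a s IH].
  have -> : (fun x => \sum_(i <- [::]) F i x) = (fun _ => 0).
    by apply/funext => x; rewrite big_nil.
  exact: cst_continuous.
have -> : (fun x => \sum_(i <- a :: s) F i x) =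
   (fun x => F a x + \sum_(i <- s) F i x).
  by apply/funext => x; rewrite big_cons.
by move=> x; apply: continuousD; [apply: hF|apply: IH].
Qed.

Lemma contM (T : topologicalType) (f g : T -> R) :
  continuous f -> continuous g -> continuous (fun x => f x * g x).
Proof. by move=> cf cg x; apply: continuousM; [apply: cf|apply: cg]. Qed.

Lemma mx_cont (T : topologicalType) m n (f : T -> 'M[R]_(m, n)) :
  (forall i j, continuous (fun x => f x i j)) -> continuous f.
Proof.
move=> hf x; apply/cvg_mx_entourageP => A entA.
apply: filter_forall => i; apply: filter_forall => j.
have := hf i j x (xsection A (f x i j)) (nbhs_entourage _ entA).
move=> H.
have HH : [set y | xsection A (f x i j) (f y i j)] `<=`
          [set y | (f x i j, f y i j) \in A].
  by move=> y /= /xsectionP Hy; apply: mem_set.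
exact: (filterS HH H).
Qed.
End Topo.

Section Compact.
Variables (R : realType) (m : nat).
Local Notation NN := (m * m + 1)%N.
Local Notation PP := (NN + NN * m)%N.

Definition Wp (v : 'rV[R]_PP) (l : 'I_NN) : R := v ord0 (lshift (NN * m) l).
Definition Xp (v : 'rV[R]_PP) (l : 'I_NN) : 'cV[R]_m :=
  \col_i v ord0 (rshift NN (mxvec_index l i)).
Definition fmap (v : 'rV[R]_PP) : 'M[R]_(m, m) :=
  \sum_l Wp v l *: (Xp v l *m (Xp v l)^T).
Definition PS : set 'rV[R]_PP :=
  [set v | (forall l, 0 <= Wp v l) /\ \sum_l Wp v l = 1 /\
           forall l, is_prob_vector (Xp v l)].

Lemma conv_image : @conv_prod_dists R m = fmap @` PS.
Proof.
apply/seteqP; split => M.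
  move=> /cara [w [x [w0 [w1 [xp ->]]]]].
  pose v : 'rV[R]_PP := row_mx (\row_l w l) (mxvec (\matrix_(l, i) x l i ord0)).
  have hW l : Wp v l = w l by rewrite /Wp /v row_mxEl mxE.
  have hX l : Xp v l = x l.
    apply/matrixP => i z; rewrite /Xp /v mxE row_mxEr mxvecE mxE.
    by rewrite (ord1 z).
  exists v.
    split; first by move=> l; rewrite hW.
    split; first by under eq_bigr do rewrite hW.
    by move=> l; rewrite hX.
  by rewrite /fmap; apply: eq_bigr => l _; rewrite hW hX.
move=> [v [w0 [w1 xp]] <-].
by exists NN, (Wp v), (Xp v).
Qed.

Lemma PS_compact : compact PS.
Proof.
apply: (@subclosed_compact _ _
   [set v : 'rV[R]_PP | forall k, (`[0, 1]%classic : set R) (v ord0 k)]).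
- have -> : PS = [set v | (forall l, 0 <= v ord0 (lshift (NN * m) l))] `&`
     ([set v | \sum_l v ord0 (lshift (NN * m) l) = 1] `&`
     ([set v | forall l i, 0 <= v ord0 (rshift NN (mxvec_index l i))] `&`
      [set v | forall l, \sum_i v ord0 (rshift NN (mxvec_index l i)) = 1])).
    apply/seteqP; split => v /=.
      move=> [h1 [h2 h3]]; split=> //; split=> //; split.
        by move=> l i; have [+ _] := h3 l => /(_ i); rewrite mxE.
      by move=> l; have [_ <-] := h3 l; apply: eq_bigr => i _; rewrite mxE.
    move=> [h1 [h2 [h3 h4]]]; split=> //; split=> // l; split.
      by move=> i; rewrite mxE.
    by under eq_bigr do rewrite mxE.
  have c1 : closed [set v : 'rV[R]_PP | forall l, 0 <= v ord0 (lshift (NN * m) l)].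
    apply: (@closed_forall _ _ (fun l (v : 'rV[R]_PP) => 0 <= v ord0 (lshift (NN * m) l))) => l.
    apply: (@closed_pre _ _ (fun v : 'rV[R]_PP => v ord0 (lshift (NN * m) l)) [set y | 0 <= y]).
      exact: coord_continuous.
    exact: closed_ge.
  have c2 : closed [set v : 'rV[R]_PP | \sum_l v ord0 (lshift (NN * m) l) = 1].
    apply: (@closed_pre _ _ (fun v : 'rV[R]_PP => \sum_l v ord0 (lshift (NN * m) l)) [set y | y = 1]).
      by apply: cont_sum => l; exact: coord_continuous.
    exact: closed_eq.
  have c3 : closed [set v : 'rV[R]_PP | forall l i, 0 <= v ord0 (rshift NN (mxvec_index l i))].
    apply: (@closed_forall _ _ (fun l (v : 'rV[R]_PP) => forall i,
       0 <= v ord0 (rshift NN (mxvec_index l i)))) => l.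
    apply: (@closed_forall _ _ (fun i (v : 'rV[R]_PP) =>
       0 <= v ord0 (rshift NN (mxvec_index l i)))) => i.
    apply: (@closed_pre _ _ (fun v : 'rV[R]_PP => v ord0 (rshift NN (mxvec_index l i))) [set y | 0 <= y]).
      exact: coord_continuous.
    exact: closed_ge.
  have c4 : closed [set v : 'rV[R]_PP | forall l, \sum_i v ord0 (rshift NN (mxvec_index l i)) = 1].
    apply: (@closed_forall _ _ (fun l (v : 'rV[R]_PP) =>
       \sum_i v ord0 (rshift NN (mxvec_index l i)) = 1)) => l.
    apply: (@closed_pre _ _ (fun v : 'rV[R]_PP => \sum_i v ord0 (rshift NN (mxvec_index l i))) [set y | y = 1]).
      by apply: cont_sum => i; exact: coord_continuous.
    exact: closed_eq.
  exact: (closedI c1 (closedI c2 (closedI c3 c4))).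
- apply: (@rV_compact _ _ (fun _ => `[(0:R), 1]%classic)) => _; exact: segment_compact.
- move=> v [w0 [w1 xp]] k /=; rewrite in_itv /=.
  rewrite -(splitK k); case: (fintype.split k) => [l|j] /=.
    have := w0 l; rewrite /Wp => ->; rewrite -w1 (bigD1 l) //= lerDl.
    by apply: sumr_ge0 => i _; apply: w0.
  case/mxvec_indexP: j => l i.
  have [h0 h1] := xp l.
  have := h0 i; rewrite /Xp mxE => ->; rewrite -h1 (bigD1 i) //= mxE lerDl.
  by apply: sumr_ge0 => z _; apply: h0.
Qed.

Lemma fmap_cont : continuous fmap.
Proof.
apply: mx_cont => i j.
have -> : (fun v => fmap v i j) = (fun v => \sum_l
   v ord0 (lshift (NN * m) l) * (v ord0 (rshift NN (mxvec_index l i)) *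
      v ord0 (rshift NN (mxvec_index l j)))).
  apply/funext => v; rewrite /fmap summxE; apply: eq_bigr => l _.
  by rewrite !mxE big_ord1 !mxE.
apply: cont_sum => l; apply: contM; first exact: coord_continuous.
by apply: contM; exact: coord_continuous.
Qed.

Lemma conv_compact : compact (@conv_prod_dists R m).
Proof.
rewrite conv_image; apply: continuous_compact; last exact: PS_compact.
by apply: continuous_subspaceT; exact: fmap_cont.
Qed.

Lemma CE_closed (u1 u2 : 'I_m -> 'I_m -> R) : closed (CE u1 u2).
Proof.
have c1 : closed [set pi : 'M[R]_(m, m) | forall i j, 0 <= pi i j].
  apply: (@closed_forall _ _ (fun i (pi : 'M[R]_(m, m)) => forall j, 0 <= pi i j)) => i.
  apply: (@closed_forall _ _ (fun j (pi : 'M[R]_(m, m)) => 0 <= pi i j)) => j.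
  apply: (@closed_pre _ _ (fun pi : 'M[R]_(m, m) => pi i j) [set y | 0 <= y]).
    exact: coord_continuous.
  exact: closed_ge.
have c2 : closed [set pi : 'M[R]_(m, m) | \sum_i \sum_j pi i j = 1].
  apply: (@closed_pre _ _ (fun pi : 'M[R]_(m, m) => \sum_i \sum_j pi i j) [set y | y = 1]).
    apply: cont_sum => i; apply: cont_sum => j; exact: coord_continuous.
  exact: closed_eq.
have c3 : closed [set pi : 'M[R]_(m, m) | forall s t,
     \sum_z (u1 t z - u1 s z) * pi s z <= 0].
  apply: (@closed_forall _ _ (fun s (pi : 'M[R]_(m, m)) => forall t,
     \sum_z (u1 t z - u1 s z) * pi s z <= 0)) => s.
  apply: (@closed_forall _ _ (fun t (pi : 'M[R]_(m, m)) =>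
     \sum_z (u1 t z - u1 s z) * pi s z <= 0)) => t.
  apply: (@closed_pre _ _ (fun pi : 'M[R]_(m, m) => \sum_z (u1 t z - u1 s z) * pi s z)
     [set y | y <= 0]); last exact: closed_le.
  apply: cont_sum => z; apply: contM; first exact: cst_continuous.
  exact: coord_continuous.
have c4 : closed [set pi : 'M[R]_(m, m) | forall s t,
     \sum_z (u2 z t - u2 z s) * pi z s <= 0].
  apply: (@closed_forall _ _ (fun s (pi : 'M[R]_(m, m)) => forall t,
     \sum_z (u2 z t - u2 z s) * pi z s <= 0)) => s.
  apply: (@closed_forall _ _ (fun t (pi : 'M[R]_(m, m)) =>
     \sum_z (u2 z t - u2 z s) * pi z s <= 0)) => t.
  apply: (@closed_pre _ _ (fun pi : 'M[R]_(m, m) => \sum_z (u2 z t - u2 z s) * pi z s)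
     [set y | y <= 0]); last exact: closed_le.
  apply: cont_sum => z; apply: contM; first exact: cst_continuous.
  exact: coord_continuous.
exact: (closedI (closedI c1 c2) (closedI c3 c4)).
Qed.

Lemma XE_compact (u1 u2 : 'I_m -> 'I_m -> R) : compact (XE_sym u1 u2).
Proof.
rewrite /XE_sym setIC; apply: compact_closedI; first exact: conv_compact.
exact: CE_closed.
Qed.
End Compact.

Section Convex.
Variables (R : realType) (m : nat).

Lemma XE_convex (u1 u2 : 'I_m -> 'I_m -> R) :
  convex_set (XE_sym u1 u2 : set (convex_lmodType 'M[R]_(m, m))).
Proof.
move=> x y l /set_mem [hx1 hx2] /set_mem [hy1 hy2]; apply/mem_set.
have a0 : 0 <= l%:inum by [].
have a1 : l%:inum <= 1 by [].
set a := l%:inum.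
have b0 : 0 <= 1 - a by rewrite subr_ge0.
have cE : (conv l x y : 'M[R]_(m, m)) = a *: x + (1 - a) *: y by [].
have cEij i j : (conv l x y : 'M[R]_(m, m)) i j = a * x i j + (1 - a) * y i j.
  by rewrite cE !mxE.
split.
- move: hx1 hy1 => [[x0 x1] [x2 x3]] [[y0 y1] [y2 y3]].
  split; [split|split].
  + by move=> i j; rewrite cEij addr_ge0 // mulr_ge0.
  + under eq_bigr do under eq_bigr do rewrite cEij.
    transitivity (a * (\sum_i \sum_j x i j) + (1 - a) * (\sum_i \sum_j y i j));
      last by rewrite x1 y1 !mulr1 subrKC.
    rewrite !mulr_sumr -big_split /=; apply: eq_bigr => i _.
    by rewrite !mulr_sumr -big_split.
  + move=> s t; under eq_bigr do rewrite cEij mulrDr (mulrCA _ a) (mulrCA _ (1 - a)).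
    rewrite big_split /= -!mulr_sumr.
    by rewrite -[leRHS](addr0 0); apply: lerD; apply: mulr_ge0_le0.
  + move=> s t; under eq_bigr do rewrite cEij mulrDr (mulrCA _ a) (mulrCA _ (1 - a)).
    rewrite big_split /= -!mulr_sumr.
    by rewrite -[leRHS](addr0 0); apply: lerD; apply: mulr_ge0_le0.
- move: hx2 hy2 => [k1 [w1 [x1 [w10 [w11 [x1p hx]]]]]] [k2 [w2 [x2 [w20 [w21 [x2p hy]]]]]].
  exists (k1 + k2)%N.
  exists (fun z => match fintype.split z with inl i => a * w1 i | inr j => (1 - a) * w2 j end).
  exists (fun z => match fintype.split z with inl i => x1 i | inr j => x2 j end).
  have sl i : fintype.split (lshift k2 i) = inl i := unsplitK (inl i).
  have sr j : fintype.split (rshift k1 j) = inr j := unsplitK (inr j).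
  split; [|split; [|split]].
  + move=> z; case: (fintype.split z) => i; apply: mulr_ge0 => //.
  + rewrite big_split_ord /=.
    rewrite (eq_bigr (fun i => a * w1 i)); last by move=> i _; rewrite sl.
    rewrite [X in _ + X](eq_bigr (fun i => (1 - a) * w2 i)); last by move=> i _; rewrite sr.
    by rewrite -!mulr_sumr w11 w21 !mulr1 subrKC.
  + by move=> z; case: (fintype.split z).
  + rewrite cE hx hy big_split_ord /=.
    rewrite [X in _ = X + _](eq_bigr (fun i => (a * w1 i) *: (x1 i *m (x1 i)^T)));
      last by move=> i _; rewrite sl.
    rewrite [X in _ = _ + X](eq_bigr (fun i => ((1 - a) * w2 i) *: (x2 i *m (x2 i)^T)));
      last by move=> i _; rewrite sr.
    by rewrite !scaler_sumr; congr (_ + _); apply: eq_bigr => i _; rewrite scalerA.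
Qed.
End Convex.

Theorem proposition3p2 (R : realType) (m : nat) (u1 u2 : 'I_m -> 'I_m -> R) :
  (2 <= m)%N ->
  symmetric_game u1 u2 ->
  [/\ compact (XE_sym u1 u2),
      convex_set (XE_sym u1 u2 : set (convex_lmodType 'M[R]_(m, m)))
    & semialgebraic (XE_sym u1 u2)].
Proof.
move=> hm _; split; [exact: XE_compact|exact: XE_convex|].
by case: m u1 u2 hm => [//|n] u1 u2 _; apply: XE_semialg.
Qed.
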